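(* Let $p$ be a prime such that $2$ is a generator of the multiplicative group $(\mathbb{Z}/p\mathbb{Z})^*$, and let $F_{mt}:\mathbb{F}_p^2\to\mathbb{F}_p^2$ be the map $F_{mt}(x,y)=(x^2y(x-y),\;2xy^2(x-y))$, where $\mathbb{F}_p=\mathbb{Z}/p\mathbb{Z}$. Then there exists $N\ge 1$ such that the $N$-th iterate $F_{mt}^{\circ N}$ sends every point of $\mathbb{F}_p^2$ to $(0,0)$.
   Context: $F_{mt}$ is the reduction modulo $p$ of the integer polynomial map $(x,y)\mapsto(x^2y(x-y),\,2xy^2(x-y))$ (called the ''multiplicative trap''); $F_{mt}^{\circ N}$ denotes its $N$-fold composition with itself. *)

(* Defs.v *)
From mathcomp Require Import all_boot all_order all_algebra.
Set Implicit Arguments. Unset Strict Implicit. Unset Printing Implicit Defensive.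
Import GRing.Theory.
Local Open Scope ring_scope.

Definition two_generates (p : nat) : Prop :=
  (2%:R : 'F_p) != 0 /\ forall x : 'F_p, x != 0 -> exists k : nat, x = 2%:R ^+ k.

Definition F_mt (p : nat) (v : 'F_p * 'F_p) : 'F_p * 'F_p :=
  let: (x, y) := v in
  (x ^+ 2 * y * (x - y), 2%:R * x * y ^+ 2 * (x - y)).

(* Main.v *)
Require Import Defs.
From mathcomp Require Import all_boot all_order all_algebra finfield.
From mathcomp Require Import ring.
Local Open Scope ring_scope.
Import GRing.Theory.

Lemma Fmt_fix (p : nat) m : iter m (F_mt (p:=p)) (0,0) = (0,0).
Proof. elim: m => //= m ->; by rewrite /F_mt expr0n /= !(mul0r, mulr0). Qed.

Lemma Fmt_zero (p : nat) (x y : 'F_p) : (x == 0) || (y == 0) || (x == y) ->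
  F_mt (x, y) = (0, 0).
Proof.
case/orP=> [/orP[]|] /eqP->; rewrite /F_mt /=.
- by rewrite expr0n /= !(mul0r, mulr0).
- by rewrite expr0n /= !(mul0r, mulr0).
- by rewrite subrr !mulr0.
Qed.

Lemma Fmt_L (p : nat) n : forall x y : 'F_p, y / x * 2%:R ^+ n = 1 ->
  iter n.+1 (F_mt (p:=p)) (x,y) = (0,0).
Proof.
elim: n => [|n IH] x y.
  rewrite expr0 mulr1 => h.
  have hx : x != 0 by apply/eqP=> ex; move: h; rewrite ex invr0 mulr0 => /eqP; rewrite eq_sym oner_eq0.
  have : y = x by rewrite -[y](divfK hx) h mul1r.
  by move=> ->; apply: Fmt_zero; rewrite eqxx !orbT.
move=> h; rewrite iterSr.
have hx : x != 0 by apply/eqP=> ex; move: h; rewrite ex invr0 mulr0 mul0r => /eqP; rewrite eq_sym oner_eq0.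
have hy : y != 0 by apply/eqP=> ex; move: h; rewrite ex !mul0r => /eqP; rewrite eq_sym oner_eq0.
have [exy|nxy] := eqVneq x y.
  by rewrite Fmt_zero ?exy ?eqxx ?orbT // Fmt_fix.
rewrite /F_mt; apply: IH.
have hxy : x - y != 0 by rewrite subr_eq0.
have e : 2%:R * x * y ^+ 2 * (x - y) / (x ^+ 2 * y * (x - y)) = 2%:R * (y / x).
  by field; rewrite hx hy hxy.
by rewrite e -[RHS]h exprS; ring.
Qed.

Theorem mainTheorem2 (p : nat) (hp : prime p) (h2 : two_generates p) :
  exists N : nat, (1 <= N)%N /\
    forall v : 'F_p * 'F_p, iter N (F_mt (p:=p)) v = (0, 0).
Proof.
case: h2 => h20 h2.
have p2 := prime_gt1 hp.
exists p.-1; split; first by case: p p2 {hp h20 h2} => [|[|]].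
case=> x y.
have [hx|hx] := eqVneq x 0.
  by case: p p2 {hp h20 h2} x y hx => [|[|p]] // _ x y hx; rewrite iterSr Fmt_zero ?hx // Fmt_fix.
have [hy|hy] := eqVneq y 0.
  by case: p p2 {hp h20 h2} x y hx hy => [|[|p]] // _ x y hx hy; rewrite iterSr Fmt_zero ?hy ?orbT // Fmt_fix.
have hr : (y / x)^-1 != 0 by rewrite invr_eq0 mulf_neq0 ?invr_eq0.
have [k hk] := h2 _ hr.
have fermat : (2%:R : 'F_p) ^+ p.-1 = 1.
  have e := expf_card (2%:R : 'F_p); rewrite card_Fp // in e.
  apply: (mulfI h20); rewrite mulr1 -exprS prednK //; exact: ltnW.
have hk' : (2%:R : 'F_p) ^+ (k %% p.-1) = (y / x)^-1.
  by rewrite hk {2}(divn_eq k p.-1) exprD mulnC exprM fermat expr1n mul1r.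
have lt : (k %% p.-1 < p.-1)%N by rewrite ltn_mod; case: p p2 {hp h20 h2 fermat hk' x y hx hy hr hk} => [|[|]].
rewrite -(subnK lt) iterD Fmt_L; first exact: Fmt_fix.
rewrite hk' mulfV //.
by rewrite mulf_neq0 ?invr_eq0.
Qed.
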